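(* Let $a\in\mathbb{C}$ with $|a-\tfrac14|\le\tfrac14$ and $a\neq0$, and let $\varphi(z)=az^2+(1-2a)z+a$. Then the iterates $\varphi_n$ converge to $1$ uniformly on the entire open disk $\mathbb{D}$.
   Context: $\mathbb{D}$ is the open unit disk; $\varphi_n$ denotes the $n$-th iterate of $\varphi$. Uniform convergence on $\mathbb{D}$ means $\lim_{n\to\infty}\sup_{z\in\mathbb{D}}|\varphi_n(z)-1|=0$. *)

(* Defs.v *)
From Stdlib Require Import Reals.
From Coquelicot Require Import Coquelicot.
Open Scope R_scope.

Definition phi (a z : C) : C :=
  (a * (z * z) + (1 - 2 * a) * z + a)%C.

Definition phi_iter (a : C) (n : nat) (z : C) : C :=
  Nat.iter n (phi a) z.

(* Main.v *)
Require Import Defs.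
From Stdlib Require Import Reals Lra Psatz.
From Coquelicot Require Import Coquelicot.
Open Scope R_scope.

Lemma core_R al be p q : 0 < al -> al*al+be*be <= al/2 -> p < al - 1/2 ->
  (al*al-be*be)*p + 2*al*be*q <= al*(p*p+q*q).
Proof.
  intros H1 H2 H3.
  assert (Hid : forall c, be*be*(p*p+q*q) - c*((al*al-be*be)*p + 2*al*be*q)
     = (p+c)*(be*be*p - c*al*al) + (be*q - c*al)*(be*q-c*al)) by (intros; ring).
  specialize (Hid (1/2 - al)).
  destruct (Rle_lt_or_eq_dec 0 (1/2-al)) as [Hc'|Hc']; [nra| |].
  - assert (be*be <= al*(1/2-al)) by nra.
    assert (0 <= (-(p+(1/2-al)))*(-(be*be*p - (1/2-al)*al*al))) by (apply Rmult_le_pos; [lra| assert (0 <= be*be*(-p)) by (apply Rmult_le_pos; nra); assert (0 <= (1/2-al)*al*al) by (apply Rmult_le_pos; nra); nra]).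
    pose proof (Rle_0_sqr (be*q-(1/2-al)*al)) as Hs1. unfold Rsqr in Hs1.
    assert (0 <= p*p+q*q) by (pose proof (Rle_0_sqr p); pose proof (Rle_0_sqr q); unfold Rsqr in *; lra).
    assert (be*be*(p*p+q*q) <= al*(1/2-al)*(p*p+q*q)) by (apply Rmult_le_compat_r; lra).
    apply (Rmult_le_reg_l (1/2-al)); [lra|]. nra.
  - assert (al = 1/2) by lra.
    assert (be = 0) by nra. subst. nra.
Qed.

Lemma v2_R al be p q : 0 < al -> al*al+be*be <= al/2 -> p < al - 1/2 ->
  al*p + be*q <= (p*p+q*q)/2.
Proof.
  intros H1 H2 H3.
  assert (1/4 <= (p-al)*(p-al)) by nra.
  pose proof (Rle_0_sqr (q-be)). unfold Rsqr in *. nra.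
Qed.

Lemma big_R al be p q : 0 < al -> al*al+be*be <= al/2 -> p < al - 1/2 ->
  3/al < Rabs (al*p + be*q - (al*al+be*be)) ->
  (al*al-be*be)*p + 2*al*be*q <= al*(p*p+q*q)/2.
Proof.
  intros H1 H2 H3 H4.
  pose proof (Rle_0_sqr be) as Hb. pose proof (Rle_0_sqr al) as Ha. unfold Rsqr in *.
  assert (Hal : al <= 1/2).
  { apply (Rmult_le_reg_l al); lra. }
  set (rho := al*al+be*be) in *.
  assert (Hrho0 : 0 <= rho) by (unfold rho; lra).
  assert (Hrho : rho <= 1/4) by lra.
  assert (Hinv : 2 <= 1/al) by (apply (Rmult_le_reg_l al); [lra|]; replace (al*(1/al)) with 1 by (field; lra); lra).
  assert (H3a : 3/al = 3 * (1/al)) by (field; lra).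
  assert (Hs : 2/al < Rabs (al*p+be*q)).
  { pose proof (Rabs_triang (al*p + be*q) (- rho)) as H. rewrite Rabs_Ropp, (Rabs_pos_eq rho) in H by lra.
    replace (al * p + be * q + - rho) with (al*p+be*q-rho) in H by ring.
    assert (2/al = 2*(1/al)) by (field; lra). lra. }
  assert (Hs2 : (2/al)*(2/al) < (al*p+be*q)*(al*p+be*q)).
  { assert (0 < 2/al) by (apply Rdiv_lt_0_compat; lra).
    assert (E: (al*p+be*q)*(al*p+be*q) = Rabs (al*p+be*q) * Rabs (al*p+be*q)).
    { rewrite <- Rabs_mult. rewrite Rabs_pos_eq; [ring| apply Rle_0_sqr]. }
    rewrite E. nra. }
  set (R := (al*al-be*be)*p + 2*al*be*q).
  set (X := al*p+be*q) in *.
  assert (Hc1 : X*X <= rho*(p*p+q*q)).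
  { assert (rho*(p*p+q*q) - X*X = (al*q-be*p)*(al*q-be*p)) by (unfold X, rho; ring).
    pose proof (Rle_0_sqr (al*q-be*p)); unfold Rsqr in *; lra. }
  assert (Hc2 : R*R <= rho*rho*(p*p+q*q)).
  { assert (rho*rho*(p*p+q*q) - R*R = ((al*al-be*be)*q - 2*al*be*p)*((al*al-be*be)*q - 2*al*be*p)) by (unfold R, rho; ring).
    pose proof (Rle_0_sqr ((al*al-be*be)*q - 2*al*be*p)); unfold Rsqr in *; lra. }
  assert (Hk : (2/al)*(2/al)*(al*al) = 4) by (field; lra).
  assert (Hrp : 0 < rho) by (unfold rho; nra).
  set (N := p*p+q*q) in *.
  assert (HN0 : 0 <= N) by (unfold N; nra).
  assert (HA : 4 < al*al*rho*N).
  { assert (al*al*((2/al)*(2/al)) < al*al*(rho*N)) by (apply Rmult_lt_compat_l; nra). nra. }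
  assert (HB : 4*rho*rho <= al*al*N).
  { assert (rho*(4*rho*rho) <= rho * (al*al*N)) by nra.
    apply (Rmult_le_reg_l rho); lra. }
  destruct (Rle_or_lt R 0) as [HR|HR]; [nra|].
  assert (R*R <= (al*N/2)*(al*N/2)) by nra.
  assert (0 <= al*N/2) by nra.
  destruct (Rle_or_lt R (al*N/2)) as [Hf|Hf]; [exact Hf|].
  assert (0 < (R - al*N/2)*(R + al*N/2)) by (apply Rmult_lt_0_compat; lra).
  nra.
Qed.

Definition Fs (a s : C) : C :=
  let al := fst a in let be := snd a in
  let p := fst s + al in let q := snd s + be in
  let N := p*p+q*q in
  (p - 2*al + ((al*al-be*be)*p + 2*al*be*q)/N,
   q - 2*be + (2*al*be*p - (al*al-be*be)*q)/N).

Lemma Fs_eq a s : (s + a <> 0)%C -> Fs a s = (s*s/(s+a))%C.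
Proof.
  destruct a as [al be], s as [x y]. intros H.
  assert (HN : (x+al)*(x+al)+(y+be)*(y+be) <> 0).
  { intro E. apply H. destruct (Rplus_sqr_eq_0 (x+al) (y+be)) as [E1 E2]; [unfold Rsqr; lra|]. unfold Cplus, RtoC; simpl. rewrite E1, E2; reflexivity. }
  unfold Fs, Cdiv, Cmult, Cinv, Cplus; simpl. f_equal.
  all: field; lra.
Qed.

Lemma phi_step (a s : C) : (s <> 0)%C -> (s + a <> 0)%C ->
  (phi a (1 + /s) - 1 = / (s*s/(s+a)))%C.
Proof. intros H1 H2. unfold phi. field. split; auto. Qed.

Definition V2 (a s : C) : R := fst a * fst s + snd a * snd s.

Lemma step_facts (a s : C) : 0 < fst a -> fst a * fst a + snd a * snd a <= fst a / 2 ->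
  fst s < -1/2 ->
  (s <> 0)%C /\ (s + a <> 0)%C /\ fst (Fs a s) <= fst s /\
  V2 a (Fs a s) <= V2 a s - (fst a * fst a + snd a * snd a)/2 /\
  (3 / fst a < Rabs (V2 a s) -> fst (Fs a s) <= fst s - fst a / 2).
Proof.
  destruct a as [al be], s as [x y]. unfold V2, Fs; simpl. intros H1 H2 H3.
  assert (Hal : al <= 1/2).
  { pose proof (Rle_0_sqr be). unfold Rsqr in *. apply (Rmult_le_reg_l al); lra. }
  assert (Hp : x + al < al - 1/2) by lra.
  set (p := x + al) in *. set (q := y + be).
  assert (HNp : 0 < p*p+q*q).
  { pose proof (Rle_0_sqr q). unfold Rsqr in *. nra. }
  set (N := p*p+q*q) in *.
  split; [|split; [|split; [|split]]].
  - intro E. injection E. intros; lra.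
  - intro E. injection E. intros; unfold p in *; lra.
  - pose proof (core_R al be p q H1 H2 Hp).
    assert (((al * al - be * be) * p + 2 * al * be * q) / N <= al).
    { apply (Rmult_le_reg_r N); [lra|]. unfold Rdiv. rewrite Rmult_assoc, Rinv_l by lra. unfold N in *. lra. }
    unfold p in *; lra.
  - pose proof (v2_R al be p q H1 H2 Hp).
    assert (E : al*(((al * al - be * be) * p + 2 * al * be * q) / N) + be*((2 * al * be * p - (al * al - be * be) * q) / N)
       = (al*al+be*be)*((al*p+be*q)/N)) by (field; lra).
    assert ((al*p+be*q)/N <= 1/2).
    { apply (Rmult_le_reg_r N); [lra|]. unfold Rdiv. rewrite Rmult_assoc, Rinv_l by lra. unfold N in *. lra. }
    assert (0 <= al*al+be*be) by (pose proof (Rle_0_sqr be); unfold Rsqr in *; nra).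
    assert ((al*al+be*be)*((al*p+be*q)/N) <= (al*al+be*be)*(1/2)) by (apply Rmult_le_compat_l; lra).
    unfold p, q in *. nra.
  - intro Hb.
    assert (3/al < Rabs (al*p + be*q - (al*al+be*be))).
    { replace (al*p + be*q - (al*al+be*be)) with (al*x+be*y) by (unfold p,q; ring). exact Hb. }
    pose proof (big_R al be p q H1 H2 Hp H).
    assert (((al * al - be * be) * p + 2 * al * be * q) / N <= al/2).
    { apply (Rmult_le_reg_r N); [lra|]. unfold Rdiv. rewrite Rmult_assoc, Rinv_l by lra. unfold N in *. lra. }
    unfold p in *; lra.
Qed.

Definition clip (K v : R) : R := Rmax (-K) (Rmin v K).

Lemma clip_mono K v w : v <= w -> clip K v <= clip K w.
Proof. intros. unfold clip, Rmax, Rmin. repeat destruct Rle_dec; lra. Qed.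

Lemma clip_bound K v : 0 <= K -> -K <= clip K v <= K.
Proof. intros. unfold clip, Rmax, Rmin. repeat destruct Rle_dec; lra. Qed.

Lemma clip_step K v v' d : 0 < d <= 1 -> -K + 1 <= v <= K -> v' <= v - d ->
  clip K v' <= clip K v - d.
Proof. intros. unfold clip, Rmax, Rmin. repeat destruct Rle_dec; lra. Qed.

Theorem mainTheorem4 (a : C) :
  Cmod (a - RtoC (1/4))%C <= 1/4 -> a <> RtoC 0 ->
  forall eps : R, 0 < eps ->
  exists N : nat, forall n : nat, (N <= n)%nat ->
  forall z : C, Cmod z < 1 -> Cmod (phi_iter a n z - RtoC 1)%C < eps.
Proof.
  intros Ha Ha0 eps Heps.
  assert (Hsq : (fst a - 1/4)*(fst a - 1/4) + snd a * snd a <= 1/16).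
  { revert Ha. destruct a as [al be]. unfold Cmod, Cminus, Cplus, Copp, RtoC; simpl.
    intro Ha.
    replace ((al + - (1 / 4)) * ((al + - (1 / 4)) * 1) + (be + - 0) * ((be + - 0) * 1))
      with ((al-1/4)*(al-1/4)+be*be) in Ha by ring.
    set (X := (al-1/4)*(al-1/4)+be*be) in *.
    assert (HX : 0 <= X) by (unfold X; pose proof (Rle_0_sqr (al-1/4)); pose proof (Rle_0_sqr be); unfold Rsqr in *; lra).
    pose proof (sqrt_sqrt X HX). pose proof (sqrt_pos X).
    assert (X <= 1/16) by nra. unfold X in *. lra. }
  set (al := fst a) in *. set (be := snd a) in *.
  assert (H2 : al*al+be*be <= al/2) by nra.
  assert (H1 : 0 < al).
  { destruct (Rlt_or_le 0 al) as [h|h]; [exact h|].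
    exfalso. apply Ha0. assert (al = 0) by nra. assert (be = 0) by nra.
    destruct a as [x y]. unfold al, be in *; simpl in *. subst. reflexivity. }
  assert (Hal : al <= 1/2) by (apply (Rmult_le_reg_l al); nra).
  set (rho := al*al+be*be).
  assert (Hrho : 0 < rho) by (unfold rho; nra).
  assert (H3al : 0 < 3/al) by (apply Rdiv_lt_0_compat; lra).
  set (K := 3/al + 1).
  assert (HK : 0 < K) by (unfold K; assert (0 < 3/al) by (apply Rdiv_lt_0_compat; lra); lra).
  set (M := 2/eps).
  assert (HM : 0 < M) by (unfold M; apply Rdiv_lt_0_compat; lra).
  set (Psi := fun s : C => -(2/al)*fst s - clip K (V2 a s) * (2/rho)).
  destruct (INR_unbounded (2*M/al + 4*K/rho)) as [N0 HN0].
  exists N0. intros n Hn z Hz.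
  assert (Hz2 : fst z * fst z + snd z * snd z < 1).
  { pose proof (Cmod2_alt z). pose proof (Cmod_ge_0 z). unfold Re, Im in *. simpl in *. nra. }
  assert (Hz1 : (z - 1 <> 0)%C).
  { intro E. assert (z = 1)%C as Ez.
    { replace z with ((z - 1) + 1)%C by ring. rewrite E. ring. }
    rewrite Ez in Hz2. simpl in Hz2. lra. }
  set (s0 := (/(z-1))%C).
  assert (Hs0 : fst s0 < -1/2).
  { unfold s0. destruct z as [zx zy]. simpl in Hz2.
    unfold Cinv, Cminus, Cplus, Copp, RtoC; simpl.
    assert (Hu : zx + - 1 < 0) by nra.
    assert (HD : 0 < (zx + - 1)^2 + (zy + - 0)^2) by nra.
    apply (Rmult_lt_reg_r ((zx + - 1)^2 + (zy + - 0)^2)); [lra|].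
    unfold Rdiv. rewrite Rmult_assoc, Rinv_l by lra. nra. }
  assert (Hbase : z = (1 + / s0)%C).
  { unfold s0. field. auto. }
  assert (Hinv : forall k, fst (Nat.iter k (Fs a) s0) < -1/2 /\ phi_iter a k z = (1 + / Nat.iter k (Fs a) s0)%C /\ Psi (Nat.iter k (Fs a) s0) >= INR k + Psi s0).
  { induction k as [|k IH].
    - simpl. split; [exact Hs0|split; [exact Hbase|lra]].
    - destruct IH as [IH1 [IH2 IH3]].
      set (s := Nat.iter k (Fs a) s0) in *.
      destruct (step_facts a s H1 H2 IH1) as [F1 [F2 [F3 [F4 F5]]]].
      change (fst a) with al in F3, F4, F5. change (snd a) with be in F4.
      change (al*al+be*be) with rho in F4.
      rewrite Nat.iter_succ. fold s.
      split; [lra|split].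
      + unfold phi_iter. rewrite Nat.iter_succ. unfold phi_iter in IH2. rewrite IH2.
        rewrite Fs_eq by exact F2.
        replace (phi a (1 + / s))%C with (1 + (phi a (1 + / s) - 1))%C by ring.
        rewrite phi_step by assumption. reflexivity.
      + rewrite S_INR.
        assert (Psi (Fs a s) >= Psi s + 1); [|lra].
        unfold Psi.
        destruct (Rle_lt_dec (-K+1) (V2 a s)) as [Hv1|Hv1];
        [destruct (Rle_lt_dec (V2 a s) K) as [Hv2|Hv2]|].
        * assert (rho/2 <= 1) by (unfold rho; nra).
          pose proof (clip_step K (V2 a s) (V2 a (Fs a s)) (rho/2) ltac:(lra) (conj Hv1 Hv2) F4).
          assert (Hc : clip K (V2 a (Fs a s)) * (2/rho) <= (clip K (V2 a s) - rho/2) * (2/rho))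
            by (apply Rmult_le_compat_r; [apply Rlt_le, Rdiv_lt_0_compat|]; lra).
          replace ((clip K (V2 a s) - rho/2) * (2/rho)) with (clip K (V2 a s)*(2/rho) - 1) in Hc by (field; lra).
          assert ((2/al)*fst (Fs a s) <= (2/al)*fst s) by (apply Rmult_le_compat_l; [apply Rlt_le, Rdiv_lt_0_compat|]; lra).
          lra.
        * assert (Hb : 3/al < Rabs (V2 a s)) by (rewrite Rabs_pos_eq; unfold K in *; lra).
          pose proof (F5 Hb).
          pose proof (clip_mono K _ _ (Rlt_le _ _ (Rle_lt_trans _ _ (V2 a s) F4 ltac:(lra)))) as Hm.
          assert (Hc : clip K (V2 a (Fs a s)) * (2/rho) <= clip K (V2 a s) * (2/rho))
            by (apply Rmult_le_compat_r; [apply Rlt_le, Rdiv_lt_0_compat|]; lra).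
          assert ((2/al)*fst (Fs a s) <= (2/al)*(fst s - al/2)) by (apply Rmult_le_compat_l; [apply Rlt_le, Rdiv_lt_0_compat|]; lra).
          replace ((2/al)*(fst s - al/2)) with ((2/al)*fst s - 1) in H0 by (field; lra).
          lra.
        * assert (Hb : 3/al < Rabs (V2 a s)) by (rewrite Rabs_left; unfold K in *; lra).
          pose proof (F5 Hb).
          pose proof (clip_mono K _ _ (Rlt_le _ _ (Rle_lt_trans _ _ (V2 a s) F4 ltac:(lra)))) as Hm.
          assert (Hc : clip K (V2 a (Fs a s)) * (2/rho) <= clip K (V2 a s) * (2/rho))
            by (apply Rmult_le_compat_r; [apply Rlt_le, Rdiv_lt_0_compat|]; lra).
          assert ((2/al)*fst (Fs a s) <= (2/al)*(fst s - al/2)) by (apply Rmult_le_compat_l; [apply Rlt_le, Rdiv_lt_0_compat|]; lra).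
          replace ((2/al)*(fst s - al/2)) with ((2/al)*fst s - 1) in H0 by (field; lra).
          lra. }
  destruct (Hinv n) as [Ef [E HP]].
  set (Sn := Nat.iter n (Fs a) s0) in *.
  assert (Hp0 : Psi s0 >= - 2*K/rho).
  { unfold Psi. destruct (clip_bound K (V2 a s0)) as [_ Hcb]; [lra|].
    assert (clip K (V2 a s0) * (2/rho) <= K * (2/rho)) by (apply Rmult_le_compat_r; [apply Rlt_le, Rdiv_lt_0_compat|]; lra).
    assert (0 <= -(2/al) * fst s0).
    { assert (0 < 2/al) by (apply Rdiv_lt_0_compat; lra). nra. }
    replace (- 2*K/rho) with (- (K*(2/rho))) by (field; lra). lra. }
  assert (HnN : INR N0 <= INR n) by (apply le_INR; exact Hn).
  assert (HSn0 : Sn <> 0%C) by (intro Eq; rewrite Eq in Ef; simpl in Ef; lra).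
  assert (HSM : M < Cmod Sn).
  { destruct (Rlt_or_le M (Cmod Sn)) as [h|h]; [exact h|exfalso].
    pose proof (re_le_Cmod Sn) as Hre. unfold Re in Hre.
    assert (Hfs : - fst Sn <= M) by (pose proof (Rabs_maj2 (fst Sn)); lra).
    assert (HPs : Psi Sn <= 2*M/al + 2*K/rho).
    { unfold Psi. destruct (clip_bound K (V2 a Sn)) as [Hcb _]; [lra|].
      assert (-K * (2/rho) <= clip K (V2 a Sn) * (2/rho)) by (apply Rmult_le_compat_r; [apply Rlt_le, Rdiv_lt_0_compat|]; lra).
      assert (0 < 2/al) by (apply Rdiv_lt_0_compat; lra).
      assert (-(2/al) * fst Sn <= (2/al)*M) by nra.
      replace (2*M/al + 2*K/rho) with ((2/al)*M - (-K*(2/rho))) by (field; lra). lra. }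
    assert (4*K/rho = 2*K/rho + 2*K/rho) by (field; lra).
    lra. }
  rewrite E. replace (1 + / Sn - 1)%C with (/ Sn)%C by ring.
  rewrite Cmod_inv by exact HSn0.
  assert (/ Cmod Sn < / M) by (apply Rinv_lt_contravar; nra).
  assert (/ M = eps/2) by (unfold M; field; lra).
  lra.
Qed.
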